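(* Let $m\ge0$, $n\ge1$ and let $s_1,\dots,s_n\in\mathbb Z$ with $\sum_{i=1}^n s_i=0$. Then $y_{1^{m+1}0}^{s_1}y_{1^{m+2}0}^{s_2}\cdots y_{1^{m+n}0}^{s_n}\in S$.
   Context: Let $\{0,1\}^{\mathbb N}$ be the Cantor set of infinite binary sequences and $\{0,1\}^{<\mathbb N}$ the set of finite binary words, including the empty word; juxtaposition denotes concatenation, $0^n,1^n$ denote constant words. Homeomorphisms act on the right. Define $x,y$ by $00\eta\cdot x=0\eta$, $01\eta\cdot x=10\eta$, $1\eta\cdot x=11\eta$, and recursively $00\eta\cdot y=0(\eta\cdot y)$, $01\eta\cdot y=10(\eta\cdot y^{-1})$, $1\eta\cdot y=11(\eta\cdot y)$; $x_s$ (resp. $y_s$) sends $s\eta\mapsto s(\eta\cdot x)$ (resp. $s(\eta\cdot y)$) and fixes sequences not beginning with $s$. For $n\ge0$, $p_n$ is the homeomorphism with $1^k0\eta\cdot p_n=1^{k+1}0\eta$ for $0\le k\le n-1$, $1^n0\eta\cdot p_n=1^{n+1}\eta$, and $1^{n+1}\eta\cdot p_n=0\eta$. $T$ is the group generated by all $x_s$ and all $p_n$, and $S=\langle T,\ y_{10}y_{110}^{-1}\rangle$. *)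

(* Defs.v *)
From mathcomp Require Import all_boot all_order all_algebra.
Set Implicit Arguments. Unset Strict Implicit. Unset Printing Implicit Defensive.
Import GRing.Theory Num.Theory.

(* Points of the Cantor set {0,1}^N: infinite binary sequences (false = 0). *)
Definition cantor := nat -> bool.

Definition capp (w : seq bool) (f : cantor) : cantor :=
  fun i => if (i < size w)%N then nth false w i else f (i - size w)%N.

Definition cdrop (k : nat) (f : cantor) : cantor := fun i => f (i + k)%N.

Definition prefixb (w : seq bool) (f : cantor) : bool :=
  all (fun i => f i == nth false w i) (iota 0 (size w)).

(* Homeomorphisms act on the right: eta . (g h) = (eta . g) . h,
   i.e. as functions  rmul g h = h \o g. *)
Definition rmul (g h : cantor -> cantor) : cantor -> cantor := fun e => h (g e).
Definition idc : cantor -> cantor := fun e => e.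
Definition rprod (l : seq (cantor -> cantor)) : cantor -> cantor := foldl rmul idc l.

Definition xmap (f : cantor) : cantor :=
  if f 0%N then capp [:: true; true] (cdrop 1 f)
  else if f 1%N then capp [:: true; false] (cdrop 2 f)
  else capp [:: false] (cdrop 2 f).

Definition xs (w : seq bool) (f : cantor) : cantor :=
  if prefixb w f then capp w (xmap (cdrop (size w) f)) else f.

Definition pn (n : nat) (f : cantor) : cantor :=
  let k := find (fun i => ~~ f i) (iota 0 n.+1) in
  if (k < n)%N then capp (rcons (nseq k.+1 true) false) (cdrop k.+1 f)
  else if k == n then capp (nseq n.+1 true) (cdrop n.+1 f)
  else capp [:: false] (cdrop n.+1 f).

CoInductive stream := SCons : bool -> stream -> stream.

CoFixpoint ycof (s : stream) : stream :=
  match s with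
  | SCons false (SCons false t) => SCons false (ycof t)
  | SCons false (SCons true t) => SCons true (SCons false (yicof t))
  | SCons true t => SCons true (SCons true (ycof t))
  end
with yicof (s : stream) : stream :=
  match s with
  | SCons false t => SCons false (SCons false (yicof t))
  | SCons true (SCons false t) => SCons false (SCons true (ycof t))
  | SCons true (SCons true t) => SCons true (yicof t)
  end.

CoFixpoint of_fun (f : cantor) : stream := SCons (f 0%N) (of_fun (fun n => f n.+1)).

Fixpoint snth (n : nat) (s : stream) : bool :=
  match s with SCons b t => match n with 0 => b | k.+1 => snth k t end end.

Definition ymap (f : cantor) : cantor := fun n => snth n (ycof (of_fun f)).
Definition yimap (f : cantor) : cantor := fun n => snth n (yicof (of_fun f)).

Definition ys (w : seq bool) (f : cantor) : cantor :=
  if prefixb w f then capp w (ymap (cdrop (size w) f)) else f.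
Definition yis (w : seq bool) (f : cantor) : cantor :=
  if prefixb w f then capp w (yimap (cdrop (size w) f)) else f.

Definition ypow (w : seq bool) (k : int) : cantor -> cantor :=
  match k with
  | Posz n => rprod (nseq n (ys w))
  | Negz n => rprod (nseq n.+1 (yis w))
  end.

Inductive gen (A : (cantor -> cantor) -> Prop) : (cantor -> cantor) -> Prop :=
| gen_id : gen A idc
| gen_gen g : A g -> gen A g
| gen_inv g h : A g -> (forall e, h (g e) = e) -> (forall e, g (h e) = e) -> gen A h
| gen_mul g h : gen A g -> gen A h -> gen A (rmul g h).

Definition Tgen (g : cantor -> cantor) : Prop :=
  (exists w, g = xs w) \/ (exists n, g = pn n).
Definition Tgrp := gen Tgen.
Definition Sgrp :=
  gen (fun g => Tgrp g \/ g = rmul (ys [:: true; false]) (yis [:: true; true; false])).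

Definition ones0 (k : nat) : seq bool := rcons (nseq k true) false.

(* Main.v *)
Require Import Defs.
From mathcomp Require Import all_boot all_order all_algebra.
Import GRing.Theory Num.Theory.
Local Open Scope ring_scope.
From Stdlib Require Import FunctionalExtensionality.
Local Close Scope ring_scope.

Definition ctl (f : cantor) : cantor := fun i => f i.+1.
Definition ccons (b : bool) (g : cantor) : cantor := fun i => if i is k.+1 then g k else b.

Lemma stream_unf s : s = match s with SCons b t => SCons b t end.
Proof. by case: s. Qed.
Lemma of_fun_eq f : of_fun f = SCons (f 0) (of_fun (ctl f)).
Proof. exact: (stream_unf (of_fun f)). Qed.

Lemma ymapE f : ymap f = if f 0 then ccons true (ccons true (ymap (ctl f)))
  else if f 1 then ccons true (ccons false (yimap (ctl (ctl f))))
  else ccons false (ymap (ctl (ctl f))).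
Proof.
apply: functional_extensionality => i; rewrite {1}/ymap (of_fun_eq f).
case: (f 0).
  by case: i => [|[|i]] /=.
rewrite (of_fun_eq (ctl f)); change (ctl f 0) with (f 1).
by case: (f 1); case: i => [|[|i]].
Qed.

Lemma yimapE f : yimap f = if f 0 then
     (if f 1 then ccons true (yimap (ctl (ctl f)))
      else ccons false (ccons true (ymap (ctl (ctl f)))))
  else ccons false (ccons false (yimap (ctl f))).
Proof.
apply: functional_extensionality => i; rewrite {1}/yimap (of_fun_eq f).
case: (f 0); last by case: i => [|[|i]].
rewrite (of_fun_eq (ctl f)); change (ctl f 0) with (f 1).
by case: (f 1); case: i => [|[|i]].
Qed.

Arguments ymap : simpl never.
Arguments yimap : simpl never.

Lemma yK_aux k : forall f, yimap (ymap f) k = f k /\ ymap (yimap f) k = f k.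
Proof.
elim/ltn_ind: k => k IH f; split.
- rewrite (ymapE f); case E0: (f 0); last case E1: (f 1).
  + rewrite yimapE /=; case: k IH => [|k] IH //=.
    by case: (IH k (ltnSn _) (ctl f)).
  + rewrite yimapE /=; case: k IH => [|[|k]] IH //=.
    by case: (IH k (ltnW (ltnSn _)) (ctl (ctl f))).
  + rewrite yimapE /=; case: k IH => [|[|k]] IH //=.
    by case: (IH k (ltnW (ltnSn _)) (ctl (ctl f))).
- rewrite (yimapE f); case E0: (f 0); first case E1: (f 1).
  + rewrite ymapE /=; case: k IH => [|[|k]] IH //=.
    by case: (IH k (ltnW (ltnSn _)) (ctl (ctl f))).
  + rewrite ymapE /=; case: k IH => [|[|k]] IH //=.
    by case: (IH k (ltnW (ltnSn _)) (ctl (ctl f))).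
  + rewrite ymapE /=; case: k IH => [|k] IH //=.
    by case: (IH k (ltnSn _) (ctl f)).
Qed.

Lemma yK1 f : yimap (ymap f) = f.
Proof. by apply: functional_extensionality => k; case: (yK_aux k f). Qed.
Lemma yK2 f : ymap (yimap f) = f.
Proof. by apply: functional_extensionality => k; case: (yK_aux k f). Qed.

Lemma capp_nil g : capp [::] g = g.
Proof. by apply: functional_extensionality => i; rewrite /capp /= subn0. Qed.
Lemma capp_cons b w g : capp (b :: w) g = ccons b (capp w g).
Proof. by apply: functional_extensionality => -[|i] //; rewrite /capp /= ltnS subSS. Qed.
Lemma cdrop0 f : cdrop 0 f = f.
Proof. by apply: functional_extensionality => i; rewrite /cdrop addn0. Qed.
Lemma cdropS k f : cdrop k.+1 f = cdrop k (ctl f).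
Proof. by apply: functional_extensionality => i; rewrite /cdrop /ctl addnS. Qed.
Lemma prefixb_cons b w f : prefixb (b :: w) f = (f 0 == b) && prefixb w (ctl f).
Proof.
rewrite /prefixb /=; congr andb.
rewrite (iotaDl 1 0) all_map; apply: eq_all => i /=.
by rewrite add1n.
Qed.
Lemma ccons_eta f : ccons (f 0) (ctl f) = f.
Proof. by apply: functional_extensionality => -[|i]. Qed.
Lemma ctl_ccons b g : ctl (ccons b g) = g.
Proof. by []. Qed.

Definition Fw (w : seq bool) (phi : cantor -> cantor) (f : cantor) : cantor :=
  if prefixb w f then capp w (phi (cdrop (size w) f)) else f.

Lemma pref_capp w g : prefixb w (capp w g).
Proof. by elim: w => [|b w IH] //=; rewrite capp_cons prefixb_cons /= eqxx. Qed.
Lemma cdrop_capp w g : cdrop (size w) (capp w g) = g.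
Proof. by elim: w => [|b w IH] /=; rewrite ?cdrop0 ?capp_nil // capp_cons cdropS. Qed.
Lemma capp_cdrop w f : prefixb w f -> capp w (cdrop (size w) f) = f.
Proof.
elim: w f => [|b w IH] f /=; first by rewrite cdrop0 capp_nil.
rewrite prefixb_cons => /andP[/eqP <- H].
by rewrite capp_cons cdropS IH // ccons_eta.
Qed.

Lemma Fw_inv w phi psi : (forall f, psi (phi f) = f) -> forall f, Fw w psi (Fw w phi f) = f.
Proof.
move=> H f; rewrite /Fw; case E: (prefixb w f); last by rewrite E.
by rewrite pref_capp cdrop_capp H capp_cdrop.
Qed.

Lemma pref_nth w f i : prefixb w f -> i < size w -> f i = nth false w i.
Proof.
move=> /allP H Hi; apply/eqP; apply: H; by rewrite mem_iota.
Qed.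

Lemma Fw_comm w v phi psi i : i < size w -> i < size v -> nth false w i != nth false v i ->
  forall f, Fw w phi (Fw v psi f) = Fw v psi (Fw w phi f).
Proof.
move=> Hw Hv Hn.
have K : forall f, prefixb w f -> prefixb v f -> False.
  move=> f H1 H2; move: Hn; by rewrite -(pref_nth _ _ _ H1 Hw) -(pref_nth _ _ _ H2 Hv) eqxx.
move=> f; rewrite /Fw.
case E1: (prefixb w f); case E2: (prefixb v f); rewrite ?E1 ?E2 //.
- by case: (K f).
- case E3: (prefixb v _) => //; by case: (K _ (pref_capp _ _) E3).
- case E3: (prefixb w _) => //; by case: (K _ E3 (pref_capp _ _)).
Qed.

Definition xinv (f : cantor) : cantor :=
  if f 0 then (if f 1 then ccons true (ctl (ctl f)) else ccons false (ccons true (ctl (ctl f))))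
  else ccons false (ccons false (ctl f)).

Lemma ccons_eta2 f : ccons (f 0) (ccons (f 1) (ctl (ctl f))) = f.
Proof. by apply: functional_extensionality => -[|[|i]]. Qed.

Lemma xsE f : xs [::] f = if f 0 then ccons true (ccons true (ctl f))
  else if f 1 then ccons true (ccons false (ctl (ctl f))) else ccons false (ctl (ctl f)).
Proof.
rewrite /xs /= capp_nil cdrop0 /xmap.
by case: (f 0); [|case: (f 1)]; rewrite !capp_cons capp_nil ?cdropS cdrop0.
Qed.

Lemma xK f : xs [::] (xinv f) = f.
Proof.
rewrite -(ccons_eta2 f); move: (f 0) (f 1) (ctl (ctl f)) => a b g.
by case: a; case: b; rewrite /xinv /= xsE.
Qed.

Lemma xiK f : xinv (xs [::] f) = f.
Proof.
rewrite -(ccons_eta2 f); move: (f 0) (f 1) (ctl (ctl f)) => a b g.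
by case: a; case: b; rewrite xsE /xinv /=.
Qed.

Lemma conjx w0 phi f :
  xs [::] (Fw (true :: w0) phi (xinv f)) = Fw (true :: true :: w0) phi f.
Proof.
rewrite -(ccons_eta2 f); move: (f 0) (f 1) (ctl (ctl f)) => a b g.
case: a; last by rewrite /xinv /= /Fw ?prefixb_cons /= xsE.
case: b; last by rewrite /xinv /= /Fw ?prefixb_cons /= xsE.
rewrite /xinv /= /Fw !prefixb_cons /= !ctl_ccons.
case: (prefixb w0 g); last by rewrite xsE.
by rewrite xsE /= !capp_cons !cdropS.
Qed.

Import GRing.Theory Num.Theory.
Open Scope ring_scope.

Lemma int_ind' (Q : int -> Prop) : Q 0 -> (forall t, Q t -> Q (t + 1)) ->
  (forall t, Q t -> Q (t - 1)) -> forall t, Q t.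
Proof.
move=> H0 HS HP; case=> n.
  elim: n => [|n IH] //; have -> : Posz n.+1 = Posz n + 1 by rewrite -PoszD addn1.
  exact: HS.
elim: n => [|n IH]; first by have -> : Negz 0 = 0 - 1 by []; exact: HP.
have -> : Negz n.+1 = Negz n - 1 by rewrite !NegzE -addn1 PoszD opprD.
exact: HP.
Qed.

Lemma foldl_rmul a l e : foldl rmul a l e = rprod l (a e).
Proof.
elim: l a e => [|h l IH] a e //=.
by rewrite IH /rprod /= (IH (rmul idc h)).
Qed.
Lemma rprod_cons h l e : rprod (h :: l) e = rprod l (h e).
Proof. by rewrite /rprod /= foldl_rmul. Qed.
Lemma rprod_nseq n g e : rprod (nseq n g) e = iter n g e.
Proof.
elim: n e => [|n IH] e //=.
by rewrite rprod_cons IH -iterSr.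
Qed.

Definition pwv (g gi : cantor -> cantor) (t : int) (e : cantor) : cantor :=
  match t with Posz n => iter n g e | Negz n => iter n.+1 gi e end.

Lemma ypowE w t e : ypow w t e = pwv (ys w) (yis w) t e.
Proof. by case: t => n; rewrite /ypow rprod_nseq. Qed.

Section Pw.
Variables (g gi : cantor -> cantor).
Hypothesis gK : forall e, gi (g e) = e.
Hypothesis giK : forall e, g (gi e) = e.

Lemma pwvS t e : pwv g gi (t + 1) e = g (pwv g gi t e).
Proof.
case: t => n.
  by rewrite -PoszD addn1.
case: n => [|n]; first by rewrite /= giK.
have -> : Negz n.+1 + 1 = Negz n by rewrite !NegzE -addn1 PoszD opprD addrK.
by rewrite /= giK.
Qed.

Lemma pwvP t e : pwv g gi (t - 1) e = gi (pwv g gi t e).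
Proof.
case: t => n.
  case: n => [|n]; first by [].
  have -> : Posz n.+1 - 1 = Posz n by rewrite -addn1 PoszD addrK.
  by rewrite /= gK.
have -> : Negz n - 1 = Negz n.+1 by rewrite !NegzE -[n.+2]addn1 PoszD opprD.
by [].
Qed.

Lemma pwv_add t u e : pwv g gi (t + u) e = pwv g gi u (pwv g gi t e).
Proof.
elim/int_ind': u => [|u IH|u IH]; first by rewrite addr0.
  by rewrite addrA !pwvS IH.
by rewrite addrA !pwvP IH.
Qed.

Lemma pwv_comm h : (forall e, h (g e) = g (h e)) -> (forall e, h (gi e) = gi (h e)) ->
  forall t e, h (pwv g gi t e) = pwv g gi t (h e).
Proof.
move=> H1 H2.
have I1 : forall n e, h (iter n g e) = iter n g (h e).
  by elim=> [|n IH] e //=; rewrite H1 IH.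
have I2 : forall n e, h (iter n gi e) = iter n gi (h e).
  by elim=> [|n IH] e //=; rewrite H2 IH.
by case=> n e; rewrite /pwv ?I1 ?I2.
Qed.
End Pw.

Lemma ysK w e : yis w (ys w e) = e.
Proof. exact: (Fw_inv w ymap yimap yK1 e). Qed.
Lemma yisK w e : ys w (yis w e) = e.
Proof. exact: (Fw_inv w yimap ymap yK2 e). Qed.

Lemma ones_comm j phi psi f :
  Fw (ones0 j) phi (Fw (ones0 j.+1) psi f) = Fw (ones0 j.+1) psi (Fw (ones0 j) phi f).
Proof.
apply: (Fw_comm _ _ _ _ j).
- by rewrite /ones0 size_rcons size_nseq.
- by rewrite /ones0 size_rcons size_nseq.
- by rewrite /ones0 !nth_rcons !size_nseq ltnn ltnSn nth_nseq eqxx leqnn.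
Qed.

Lemma S_x : Sgrp (xs [::]).
Proof. apply: gen_gen; left; apply: gen_gen; left; by exists [::]. Qed.
Lemma S_xi : Sgrp xinv.
Proof.
apply: (@gen_inv _ (xs [::])); [left; apply: gen_gen; left; by exists [::] | exact: xiK | exact: xK].
Qed.

Definition cc j := rmul (ys (ones0 j)) (yis (ones0 j.+1)).
Definition ci j := rmul (ys (ones0 j.+1)) (yis (ones0 j)).

Lemma conj_c u v phi psi :
  rmul (rmul xinv (rmul (Fw (true :: u) phi) (Fw (true :: v) psi))) (xs [::]) =
  rmul (Fw (true :: true :: u) phi) (Fw (true :: true :: v) psi).
Proof.
apply: functional_extensionality => e; rewrite /rmul.
by rewrite -(conjx u phi e) -(conjx v psi) xiK.
Qed.

Lemma S_c j : Sgrp (cc j.+1) /\ Sgrp (ci j.+1).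
Proof.
elim: j => [|j [IH1 IH2]].
  have H1 : Sgrp (cc 1) by apply: gen_gen; right.
  split => //.
  apply: (@gen_inv _ (cc 1)); first by right.
    by move=> e; rewrite /cc /ci /rmul yisK ysK.
  by move=> e; rewrite /cc /ci /rmul yisK ysK.
have E1 := conj_c (ones0 j) (ones0 j.+1) ymap yimap.
have E2 := conj_c (ones0 j.+1) (ones0 j) ymap yimap.
split.
  have H := gen_mul (gen_mul S_xi IH1) S_x.
  rewrite /cc in H *; by rewrite E1 in H.
have H := gen_mul (gen_mul S_xi IH2) S_x.
rewrite /ci in H *; by rewrite E2 in H.
Qed.

Definition PP j t := rmul (ypow (ones0 j.+1) t) (ypow (ones0 j.+2) (- t)).

Lemma S_P j t : Sgrp (PP j t).
Proof.
have [C1 C2] := S_c j.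
have K1 : forall e, ys (ones0 j.+1) (ys (ones0 j.+2) e) = ys (ones0 j.+2) (ys (ones0 j.+1) e).
  move=> e; exact: ones_comm.
have K2 : forall e, ys (ones0 j.+1) (yis (ones0 j.+2) e) = yis (ones0 j.+2) (ys (ones0 j.+1) e).
  move=> e; exact: ones_comm.
have K3 : forall e, yis (ones0 j.+1) (ys (ones0 j.+2) e) = ys (ones0 j.+2) (yis (ones0 j.+1) e).
  move=> e; exact: ones_comm.
have K4 : forall e, yis (ones0 j.+1) (yis (ones0 j.+2) e) = yis (ones0 j.+2) (yis (ones0 j.+1) e).
  move=> e; exact: ones_comm.
elim/int_ind': t => [|t IH|t IH].
- have -> : PP j 0 = idc.
    by apply: functional_extensionality => e; rewrite /PP /rmul !ypowE oppr0.
  exact: gen_id.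
- have -> : PP j (t + 1) = rmul (PP j t) (cc j.+1).
    apply: functional_extensionality => e; rewrite /PP /cc /rmul !ypowE opprD.
    rewrite (pwvP _ _ (ysK _)) (pwvS _ _ (yisK _)).
    by rewrite (pwv_comm _ _ _ K1 K2).
  exact: gen_mul.
- have -> : PP j (t - 1) = rmul (PP j t) (ci j.+1).
    apply: functional_extensionality => e; rewrite /PP /ci /rmul !ypowE opprB addrC.
    rewrite (pwvS _ _ (yisK _)) (pwvP _ _ (ysK _)).
    by rewrite -(pwv_comm _ _ _ K3 K4) K3.
  exact: gen_mul.
Qed.

Lemma main_aux n : forall m (s : nat -> int), \sum_(1 <= i < n.+1) s i = 0 ->
  Sgrp (rprod [seq ypow (ones0 (m + i)) (s i) | i <- iota 1 n]).
Proof.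
elim: n => [|n IH] m s Hs; first exact: gen_id.
case: n IH Hs => [|k] IH Hs.
  rewrite big_nat1 in Hs.
  have -> : rprod [seq ypow (ones0 (m + i)) (s i) | i <- iota 1 1] = idc.
    by apply: functional_extensionality => e; rewrite /= rprod_cons ypowE Hs.
  exact: gen_id.
pose s' := fun i => if i == 1%N then s 1%N + s 2%N else s i.+1.
have Hs' : \sum_(1 <= i < k.+2) s' i = 0.
  rewrite big_nat_recl // in Hs; rewrite big_nat_recl // in Hs.
  rewrite big_nat_recl //; apply: etrans Hs; rewrite /s' /= addrA; congr (_ + _).
  by apply: eq_big_nat => i /andP[Hi _]; rewrite eqSS; case: i Hi.
have H1 := IH m.+1 s' Hs'.
have H2 := S_P m (s 1%N).
have := gen_mul H2 H1.
have ER : [seq ypow (ones0 (m.+1 + i)) (s' i) | i <- iota 2 k] =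
          [seq ypow (ones0 (m + i)) (s i) | i <- iota 3 k].
  rewrite (iotaDl 1 2) -map_comp; apply/eq_in_map => i; rewrite mem_iota => /andP[Hi _].
  rewrite /= /s' addSnnS add1n; case: i Hi => [|[|i]] //.
rewrite /= ER.
set R := [seq _ | i <- iota 3 k].
move=> H; congr Sgrp: H.
apply: functional_extensionality => e.
rewrite /rmul /PP !rprod_cons /rmul !ypowE /s' /= addn1 addn2.
by rewrite addn1 -(pwv_add _ _ (ysK _) (yisK _)) addKr.
Qed.

Theorem lemma6p8 (m n : nat) (s : nat -> int) :
  (1 <= n)%N -> \sum_(1 <= i < n.+1) s i = 0 ->
  Sgrp (rprod [seq ypow (ones0 (m + i)) (s i) | i <- iota 1 n]).
Proof. move=> _; exact: main_aux. Qed.
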